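(* Let $q>0$, $R>0$. For $(\xi,\eta,\sigma)\in\mathbb{R}^3$ and $\zeta=\xi+i\eta$ let $\Psi=(\psi_1,\psi_2)^T$ solve on $[0,R]$ $$d\psi_1=i(q\psi_2-\zeta\psi_1)\,dx+i\sigma\psi_2\circ dW_x,\qquad d\psi_2=i(q\psi_1+\zeta\psi_2)\,dx+i\sigma\psi_1\circ dW_x,\qquad \Psi(0)=(1,0)^T,$$ and set $F(\xi,\eta,\sigma):=\psi_1(R)$. Suppose $\eta_0\in(0,q)$ is such that $F(0,\eta_0,0)=0$ (i.e. $i\eta_0$ is a discrete eigenvalue of the deterministic problem with potential $q\mathbf{1}_{[0,R]}$). Then the Jacobian determinant $$\det\begin{pmatrix}\partial_\xi\,\mathrm{Re}F&\partial_\eta\,\mathrm{Re}F\\ \partial_\xi\,\mathrm{Im}F&\partial_\eta\,\mathrm{Im}F\end{pmatrix}$$ at the point $(0,\eta_0,0)$ is nonzero. Equivalently, with $c_0=\sqrt{q^2-\eta_0^2}$, $$\Big(\frac{q^2}{c_0^3}+\frac{R\eta_0}{c_0}\Big)\sin(c_0R)-\frac{R\eta_0^2}{c_0^2}\cos(c_0R)\neq0 .$$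
   Context: At $\sigma=0$ the system is deterministic and $\psi_1(R)=\cos(cR)-\frac{i\zeta}{c}\sin(cR)$ with $c=\sqrt{q^2+\zeta^2}$. *)

(* Defs.v *)
From Stdlib Require Import Reals.
Open Scope R_scope.

(* The system at sigma = 0 (deterministic Zakharov-Shabat / Dirac system)
     dpsi1/dx = i (q psi2 - zeta psi1),  dpsi2/dx = i (q psi1 + zeta psi2),
   zeta = xi + i eta, written in real coordinates
     psi1 = p1 + i p2,  psi2 = p3 + i p4. *)
Definition zs_solution (q xi eta : R) (p1 p2 p3 p4 : R -> R) : Prop :=
  p1 0 = 1 /\ p2 0 = 0 /\ p3 0 = 0 /\ p4 0 = 0 /\
  forall x : R,
    derivable_pt_lim p1 x (- q * p4 x + xi * p2 x + eta * p1 x) /\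
    derivable_pt_lim p2 x (q * p3 x - xi * p1 x + eta * p2 x) /\
    derivable_pt_lim p3 x (- q * p2 x - xi * p4 x - eta * p3 x) /\
    derivable_pt_lim p4 x (q * p1 x + xi * p3 x - eta * p4 x).

(* Main.v *)
Require Import Defs.
From Stdlib Require Import Reals Lra Psatz.
From Coquelicot Require Import Coquelicot.
Open Scope R_scope.
Definition ch (t : R) := (exp t + exp (- t)) / 2.
Definition sh (t : R) := (exp t - exp (- t)) / 2.
Definition CC1 a b x := cos (a*x) * ch (b*x).
Definition CC2 a b x := - (sin (a*x) * sh (b*x)).
Definition SS1 a b x := (a * sin (a*x) * ch (b*x) + b * cos (a*x) * sh (b*x)) / (a*a+b*b).
Definition SS2 a b x := (a * cos (a*x) * sh (b*x) - b * sin (a*x) * ch (b*x)) / (a*a+b*b).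
Lemma dC1 a b x : 0 < a -> derivable_pt_lim (CC1 a b) x (- ((a*a-b*b) * SS1 a b x - (2*a*b) * SS2 a b x)).
Proof. intro Ha. apply is_derive_Reals. unfold CC1, SS1, SS2, ch, sh. auto_derive. auto. field. nra. Qed.
Lemma dC2 a b x : 0 < a -> derivable_pt_lim (CC2 a b) x (- ((a*a-b*b) * SS2 a b x + (2*a*b) * SS1 a b x)).
Proof. intro Ha. apply is_derive_Reals. unfold CC2, SS1, SS2, ch, sh. auto_derive. auto. field. nra. Qed.
Lemma dS1 a b x : 0 < a -> derivable_pt_lim (SS1 a b) x (CC1 a b x).
Proof. intro Ha. apply is_derive_Reals. unfold CC1, SS1, SS2, ch, sh. auto_derive. nra. field. nra. Qed.
Lemma dS2 a b x : 0 < a -> derivable_pt_lim (SS2 a b) x (CC2 a b x).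
Proof. intro Ha. apply is_derive_Reals. unfold CC2, SS1, SS2, ch, sh. auto_derive. nra. field. nra. Qed.

Definition cf1 (q xi eta a b x : R) := CC1 a b x + eta * SS1 a b x + xi * SS2 a b x.
Definition cf2 (q xi eta a b x : R) := CC2 a b x + eta * SS2 a b x - xi * SS1 a b x.
Definition cf3 (q xi eta a b x : R) := - (q * SS2 a b x).
Definition cf4 (q xi eta a b x : R) := q * SS1 a b x.

Lemma cf_sol q xi eta a b : 0 < a -> a*a - b*b = q*q + xi*xi - eta*eta -> a*b = xi*eta ->
  zs_solution q xi eta (cf1 q xi eta a b) (cf2 q xi eta a b) (cf3 q xi eta a b) (cf4 q xi eta a b).
Proof.
  intros Ha Hu Hv.
  assert (Z1 : CC1 a b 0 = 1) by (unfold CC1, ch; rewrite !Rmult_0_r, cos_0, Ropp_0, exp_0; field).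
  assert (Z2 : CC2 a b 0 = 0) by (unfold CC2, sh; rewrite !Rmult_0_r, sin_0; ring).
  assert (Z3 : SS1 a b 0 = 0) by (unfold SS1, sh; rewrite !Rmult_0_r, sin_0, Ropp_0, exp_0; field; nra).
  assert (Z4 : SS2 a b 0 = 0) by (unfold SS2, sh; rewrite !Rmult_0_r, sin_0, Ropp_0, exp_0; field; nra).
  unfold cf1, cf2, cf3, cf4.
  repeat split; try (rewrite ?Z1, ?Z2, ?Z3, ?Z4; ring).
    replace (- q * (q * SS1 a b x) + xi * (CC2 a b x + eta * SS2 a b x - xi * SS1 a b x) +
     eta * (CC1 a b x + eta * SS1 a b x + xi * SS2 a b x)) with
     ((- ((a*a-b*b) * SS1 a b x - (2*a*b) * SS2 a b x)) + eta * CC1 a b x + xi * CC2 a b x)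
     by (rewrite Hu; replace (2*a*b) with (2*(a*b)) by ring; rewrite Hv; ring).
    apply derivable_pt_lim_plus; [apply derivable_pt_lim_plus|];
    [apply dC1; auto| apply derivable_pt_lim_scal; apply dS1; auto
    | apply derivable_pt_lim_scal; apply dS2; auto].
  - replace (q * - (q * SS2 a b x) - xi * (CC1 a b x + eta * SS1 a b x + xi * SS2 a b x) +
     eta * (CC2 a b x + eta * SS2 a b x - xi * SS1 a b x)) with
     ((- ((a*a-b*b) * SS2 a b x + (2*a*b) * SS1 a b x)) + eta * CC2 a b x - xi * CC1 a b x)
     by (rewrite Hu; replace (2*a*b) with (2*(a*b)) by ring; rewrite Hv; ring).
    apply derivable_pt_lim_minus; [apply derivable_pt_lim_plus|];
    [apply dC2; auto| apply derivable_pt_lim_scal; apply dS2; auto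
    | apply derivable_pt_lim_scal; apply dS1; auto].
  - replace (- q * (CC2 a b x + eta * SS2 a b x - xi * SS1 a b x) - xi * (q * SS1 a b x) -
     eta * - (q * SS2 a b x)) with (- (q * CC2 a b x)) by ring.
    apply derivable_pt_lim_opp. apply derivable_pt_lim_scal; apply dS2; auto.
  - replace (q * (CC1 a b x + eta * SS1 a b x + xi * SS2 a b x) + xi * - (q * SS2 a b x) -
     eta * (q * SS1 a b x)) with (q * CC1 a b x) by ring.
    apply derivable_pt_lim_scal; apply dS1; auto.
Qed.
Lemma DU (f : R -> R) (t l : R) : is_derive f t l -> Derive (fun x : R => f x) t = l.
Proof. intro H. apply is_derive_unique. exact H. Qed.

Lemma zs_unique q xi eta p1 p2 p3 p4 r1 r2 r3 r4 :
  zs_solution q xi eta p1 p2 p3 p4 -> zs_solution q xi eta r1 r2 r3 r4 ->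
  forall x, 0 <= x -> p1 x = r1 x /\ p2 x = r2 x.
Proof.
  intros [P1 [P2 [P3 [P4 PD]]]] [Q1 [Q2 [Q3 [Q4 QD]]]] x Hx.
  set (K := eta*eta+1).
  set (G := fun t => ((p1 t - r1 t)^2 + (p2 t - r2 t)^2 + (p3 t - r3 t)^2 + (p4 t - r4 t)^2) * exp (-(K*t))).
  set (Gd := fun t => exp (-(K*t)) * (2*eta*((p1 t - r1 t)^2 + (p2 t - r2 t)^2 - (p3 t - r3 t)^2 - (p4 t - r4 t)^2)
     - K * ((p1 t - r1 t)^2 + (p2 t - r2 t)^2 + (p3 t - r3 t)^2 + (p4 t - r4 t)^2))).
  assert (HD : forall t, derivable_pt_lim G t (Gd t)).
  { intro t. destruct (PD t) as [D1 [D2 [D3 D4]]]. destruct (QD t) as [E1 [E2 [E3 E4]]].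
    apply is_derive_Reals in D1, D2, D3, D4, E1, E2, E3, E4.
    apply is_derive_Reals. unfold G, Gd.
    auto_derive.
    - repeat split; eexists; eassumption.
    - rewrite (DU p1 _ _ D1).
      rewrite (DU p2 _ _ D2).
      rewrite (DU p3 _ _ D3).
      rewrite (DU p4 _ _ D4).
      rewrite (DU r1 _ _ E1).
      rewrite (DU r2 _ _ E2).
      rewrite (DU r3 _ _ E3).
      rewrite (DU r4 _ _ E4).
      unfold K.
      ring. }
  assert (HN : forall t, Gd t <= 0).
  { intro t. unfold Gd. pose proof (exp_pos (-(K*t))).
    pose proof (pow2_ge_0 (p1 t - r1 t)). pose proof (pow2_ge_0 (p2 t - r2 t)).
    pose proof (pow2_ge_0 (p3 t - r3 t)). pose proof (pow2_ge_0 (p4 t - r4 t)).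
    replace (2 * eta * ((p1 t - r1 t) ^ 2 + (p2 t - r2 t) ^ 2 - (p3 t - r3 t) ^ 2 - (p4 t - r4 t) ^ 2) -
      K * ((p1 t - r1 t) ^ 2 + (p2 t - r2 t) ^ 2 + (p3 t - r3 t) ^ 2 + (p4 t - r4 t) ^ 2))
      with (- ((eta-1)^2 * ((p1 t - r1 t)^2 + (p2 t - r2 t)^2) + (eta+1)^2 * ((p3 t - r3 t)^2 + (p4 t - r4 t)^2))) by (unfold K; ring).
    assert (0 <= (eta-1)^2 * ((p1 t - r1 t)^2 + (p2 t - r2 t)^2) + (eta+1)^2 * ((p3 t - r3 t)^2 + (p4 t - r4 t)^2)).
    { apply Rplus_le_le_0_compat; apply Rmult_le_pos; try apply pow2_ge_0; lra. }
    apply Rmult_le_0_l; lra. }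
  assert (HG0 : G 0 = 0) by (unfold G; rewrite P1, P2, P3, P4, Q1, Q2, Q3, Q4; ring).
  assert (HGx : G x <= 0).
  { destruct (Req_dec x 0) as [->|Hx0]. lra.
    destruct (MVT_cor2 G Gd 0 x) as [c [Hc _]]. lra. intros; apply HD.
    pose proof (HN c). nra. }
  unfold G in HGx. pose proof (exp_pos (-(K*x))).
  assert (HE : (p1 x - r1 x)^2 + (p2 x - r2 x)^2 + (p3 x - r3 x)^2 + (p4 x - r4 x)^2 <= 0).
  { apply Rmult_le_reg_r with (exp (-(K*x))); auto. lra. }
  pose proof (pow2_ge_0 (p1 x - r1 x)). pose proof (pow2_ge_0 (p2 x - r2 x)).
  pose proof (pow2_ge_0 (p3 x - r3 x)). pose proof (pow2_ge_0 (p4 x - r4 x)).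
  assert (Z1 : (p1 x - r1 x)^2 = 0) by lra. assert (Z2 : (p2 x - r2 x)^2 = 0) by lra.
  simpl in Z1, Z2. split; nra.
Qed.
Lemma bder q eta0 R0 : 0 < eta0 < q ->
  is_derive (fun eta => cf1 q 0 eta (sqrt (q*q - eta*eta)) 0 R0) eta0
   (let c0 := sqrt (q*q - eta0*eta0) in
    sin (c0*R0) * (1/c0 + R0*eta0/c0 + eta0*eta0/(c0*c0*c0)) - cos (c0*R0) * R0*eta0*eta0/(c0*c0)).
Proof.
  intros He.
  assert (Hp : 0 < q*q - eta0*eta0) by nra.
  pose proof (sqrt_lt_R0 _ Hp) as Hc.
  pose proof (sqrt_sqrt _ (Rlt_le _ _ Hp)) as Hcc.
  unfold cf1; unfold CC1, SS1, SS2, ch, sh. auto_derive.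
  - change (q*q + - (eta0*eta0)) with (q*q - eta0*eta0). repeat split; auto; try rewrite Hcc; nra.
  - change (q*q + - (eta0*eta0)) with (q*q - eta0*eta0).
    set (c0 := sqrt (q*q - eta0*eta0)) in *.
    rewrite ?Rmult_0_l, ?Rmult_0_r, ?Ropp_0, ?exp_0. field. lra.
Qed.
Definition alpha (q eta0 xi : R) :=
  sqrt ((sqrt ((q*q - eta0*eta0 + xi*xi)*(q*q - eta0*eta0 + xi*xi) + (2*xi*eta0)*(2*xi*eta0))
          + (q*q - eta0*eta0 + xi*xi)) / 2).
Definition beta (q eta0 xi : R) := xi * eta0 / alpha q eta0 xi.

Lemma alpha_facts q eta0 xi : 0 < eta0 < q ->
  0 < alpha q eta0 xi /\
  alpha q eta0 xi * alpha q eta0 xi - beta q eta0 xi * beta q eta0 xi = q*q + xi*xi - eta0*eta0 /\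
  alpha q eta0 xi * beta q eta0 xi = xi * eta0.
Proof.
  intros He.
  set (A := q*q - eta0*eta0 + xi*xi). set (B := 2*xi*eta0).
  assert (HA : 0 < A) by (unfold A; nra).
  assert (Hr0 : 0 <= A*A + B*B) by nra.
  set (r := sqrt (A*A+B*B)).
  assert (Hr : 0 <= r) by apply sqrt_pos.
  assert (Hrr : r * r = A*A+B*B) by apply sqrt_sqrt, Hr0.
  assert (Hs : 0 < (r + A)/2) by lra.
  assert (Ha : 0 < alpha q eta0 xi) by (apply sqrt_lt_R0; exact Hs).
  assert (Haa : alpha q eta0 xi * alpha q eta0 xi = (r+A)/2) by (apply sqrt_sqrt; lra).
  split; [exact Ha|]. split.
  - unfold beta. set (a := alpha q eta0 xi) in *.
    field_simplify; [|lra].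
    replace (a^4) with ((a*a)*(a*a)) by ring. replace (a^2) with (a*a) by ring.
    rewrite Haa.
    assert (K : (r + A) / 2 * ((r + A) / 2) - xi ^ 2 * eta0 ^ 2 = (q^2 + xi^2 - eta0^2) * ((r+A)/2)).
    { unfold B in Hrr. unfold A in *. nra. }
    rewrite K. field. lra.
  - unfold beta. field. lra.
Qed.

Lemma alpha0 q eta0 : 0 < eta0 < q -> alpha q eta0 0 = sqrt (q*q - eta0*eta0).
Proof.
  intros He. unfold alpha. f_equal.
  replace (q * q - eta0 * eta0 + 0 * 0) with (q*q - eta0*eta0) by ring.
  replace (2*0*eta0*(2*0*eta0)) with 0 by ring. rewrite Rplus_0_r.
  rewrite sqrt_square by nra. field.
Qed.

Lemma alpha_der q eta0 : 0 < eta0 < q -> is_derive (alpha q eta0) 0 0.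
Proof.
  intros He. assert (H0 : 0 < q*q - eta0*eta0) by nra. unfold alpha. auto_derive.
  - rewrite !Rmult_0_l, !Rmult_0_r, !Rplus_0_r. split; [nra|]. split; [|exact I].
    match goal with |- context [sqrt ?x] => pose proof (sqrt_pos x) end.
    apply Rmult_lt_0_compat; [lra|apply Rinv_0_lt_compat; lra].
  - ring.
Qed.

Lemma beta_der q eta0 : 0 < eta0 < q -> is_derive (beta q eta0) 0 (eta0 / sqrt (q*q - eta0*eta0)).
Proof.
  intros He. pose proof (alpha_der q eta0 He) as D. pose proof (alpha0 q eta0 He) as A0.
  destruct (alpha_facts q eta0 0 He) as [Hp _].
  unfold beta. auto_derive.
  - split; [eexists; exact D|]. split; [lra|exact I].
  - rewrite A0. field. rewrite <- A0; lra.
Qed.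


Lemma cder q eta0 R0 : 0 < eta0 < q ->
  is_derive (fun xi => cf2 q xi eta0 (alpha q eta0 xi) (beta q eta0 xi) R0) 0
   (let c0 := sqrt (q*q - eta0*eta0) in
    - (sin (c0*R0) * (1/c0 + R0*eta0/c0 + eta0*eta0/(c0*c0*c0)) - cos (c0*R0) * R0*eta0*eta0/(c0*c0))).
Proof.
  intros He.
  pose proof (alpha_der q eta0 He) as DA. pose proof (beta_der q eta0 He) as DB.
  pose proof (alpha0 q eta0 He) as A0.
  assert (B0 : beta q eta0 0 = 0) by (unfold beta; rewrite A0; field; rewrite <- A0;
     destruct (alpha_facts q eta0 0 He); lra).
  destruct (alpha_facts q eta0 0 He) as [Hp _].
  unfold cf2; unfold CC2, SS1, SS2, ch, sh. auto_derive.
  - repeat split; try (eexists; eassumption); nra.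
  - rewrite (DU _ _ _ DA), (DU _ _ _ DB), B0. rewrite A0 in *.
    set (c0 := sqrt (q*q - eta0*eta0)) in *.
    rewrite ?Rmult_0_l, ?Rmult_0_r, ?Ropp_0, ?exp_0. field. lra.
Qed.

Lemma ader q eta0 R0 : 0 < eta0 < q ->
  ex_derive (fun xi => cf1 q xi eta0 (alpha q eta0 xi) (beta q eta0 xi) R0) 0.
Proof.
  intros He.
  pose proof (alpha_der q eta0 He) as DA. pose proof (beta_der q eta0 He) as DB.
  destruct (alpha_facts q eta0 0 He) as [Hp _].
  unfold cf1; unfold CC1, SS1, SS2, ch, sh. auto_derive.
  repeat split; try (eexists; eassumption); nra.
Qed.

Theorem mainTheorem6 (q R0 eta0 : R) (p1 p2 p3 p4 : R -> R -> R -> R) :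
  0 < q -> 0 < R0 -> 0 < eta0 < q ->
  (forall xi eta : R,
     zs_solution q xi eta (p1 xi eta) (p2 xi eta) (p3 xi eta) (p4 xi eta)) ->
  p1 0 eta0 R0 = 0 -> p2 0 eta0 R0 = 0 ->
  exists a b c d : R,
    derivable_pt_lim (fun xi => p1 xi eta0 R0) 0 a /\
    derivable_pt_lim (fun eta => p1 0 eta R0) eta0 b /\
    derivable_pt_lim (fun xi => p2 xi eta0 R0) 0 c /\
    derivable_pt_lim (fun eta => p2 0 eta R0) eta0 d /\
    a * d - b * c <> 0.
Proof.
  intros Hq HR He Hsol HF1 HF2.
  assert (Heta : forall eta, -q < eta < q ->
     p1 0 eta R0 = cf1 q 0 eta (sqrt (q*q - eta*eta)) 0 R0 /\
     p2 0 eta R0 = cf2 q 0 eta (sqrt (q*q - eta*eta)) 0 R0).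
  { intros eta Hb.
    assert (Hp : 0 < q*q - eta*eta) by nra.
    pose proof (sqrt_lt_R0 _ Hp) as Hc.
    pose proof (sqrt_sqrt _ (Rlt_le _ _ Hp)) as Hcc.
    apply (zs_unique q 0 eta _ _ _ _ _ _ _ _ (Hsol 0 eta)
      (cf_sol q 0 eta (sqrt (q*q - eta*eta)) 0 Hc ltac:(rewrite Hcc; ring) ltac:(ring))).
    lra. }
  assert (Hxi : forall xi,
     p1 xi eta0 R0 = cf1 q xi eta0 (alpha q eta0 xi) (beta q eta0 xi) R0 /\
     p2 xi eta0 R0 = cf2 q xi eta0 (alpha q eta0 xi) (beta q eta0 xi) R0).
  { intros xi. destruct (alpha_facts q eta0 xi He) as [H1 [H2 H3]].
    apply (zs_unique q xi eta0 _ _ _ _ _ _ _ _ (Hsol xi eta0) (cf_sol q xi eta0 _ _ H1 H2 H3)).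
    lra. }
  assert (Hloc : locally eta0 (fun eta => -q < eta < q)).
  { apply (open_and (fun u => -q < u) (fun u => u < q)); [apply open_gt|apply open_lt|lra]. }
  set (c0 := sqrt (q*q - eta0*eta0)).
  assert (Hp : 0 < q*q - eta0*eta0) by nra.
  assert (Hc : 0 < c0) by (apply sqrt_lt_R0; exact Hp).
  assert (Hcc : c0 * c0 = q*q - eta0*eta0) by (apply sqrt_sqrt; lra).
  set (bv := sin (c0*R0) * (1/c0 + R0*eta0/c0 + eta0*eta0/(c0*c0*c0)) - cos (c0*R0) * R0*eta0*eta0/(c0*c0)).
  exists (Derive (fun xi => cf1 q xi eta0 (alpha q eta0 xi) (beta q eta0 xi) R0) 0), bv, (- bv), 0.
  split; [|split; [|split; [|split]]].
  - apply is_derive_Reals.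
    apply (is_derive_ext (fun xi => cf1 q xi eta0 (alpha q eta0 xi) (beta q eta0 xi) R0)).
    { intro t. symmetry. apply (Hxi t). }
    apply Derive_correct. apply ader; exact He.
  - apply is_derive_Reals.
    apply (is_derive_ext_loc (fun eta => cf1 q 0 eta (sqrt (q*q - eta*eta)) 0 R0)).
    { apply (filter_imp _ _ (fun t Ht => eq_sym (proj1 (Heta t Ht))) Hloc). }
    apply (bder q eta0 R0 He).
  - apply is_derive_Reals.
    apply (is_derive_ext (fun xi => cf2 q xi eta0 (alpha q eta0 xi) (beta q eta0 xi) R0)).
    { intro t. symmetry. apply (Hxi t). }
    apply (cder q eta0 R0 He).
  - apply is_derive_Reals.
    apply (is_derive_ext_loc (fun _ => 0)).
    { apply (filter_imp (fun eta => -q < eta < q)); [|exact Hloc]. intros t Ht. simpl.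
      rewrite (proj2 (Heta t Ht)).
      assert (0 < q*q - t*t) by nra.
      assert (0 < sqrt (q*q - t*t)) by (apply sqrt_lt_R0; auto).
      unfold cf2, CC2, SS1, SS2, sh, ch. rewrite !Rmult_0_l, Ropp_0, exp_0. field. nra. }
    apply (is_derive_const 0).
  -
    assert (Hcos : cos (c0*R0) = - (eta0 * sin (c0*R0) / c0)).
    { destruct (Heta eta0 ltac:(lra)) as [E _]. rewrite HF1 in E. fold c0 in E.
      unfold cf1, CC1, SS1, SS2, ch, sh in E. rewrite !Rmult_0_l, Ropp_0, exp_0 in E.
      assert (E' : cos (c0*R0) + eta0 * sin (c0*R0) / c0 = 0) by (match type of E with 0 = ?L => transitivity L end; [field; lra | symmetry; exact E]).
      lra. }
    assert (Hs : sin (c0*R0) <> 0).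
    { intro Z. pose proof (sin2_cos2 (c0*R0)) as P. rewrite Hcos, Z in P. unfold Rsqr in P.
      field_simplify in P; lra. }
    assert (Hbv : bv * (c0*c0*c0) = sin (c0*R0) * (c0*c0 + eta0*eta0) * (1 + R0*eta0)).
    { unfold bv. rewrite Hcos. field. lra. }
    assert (bv <> 0).
    { intro Z. rewrite Z in Hbv. assert (0 < (c0*c0 + eta0*eta0) * (1 + R0*eta0)) by (apply Rmult_lt_0_compat; nra).
      assert (HZ : sin (c0*R0) * ((c0*c0 + eta0*eta0) * (1 + R0*eta0)) = 0) by lra.
      apply Rmult_integral in HZ. lra. }
    replace (Derive (fun xi => cf1 q xi eta0 (alpha q eta0 xi) (beta q eta0 xi) R0) 0 * 0 - bv * - bv)
      with (bv * bv) by ring.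
    apply Rmult_integral_contrapositive_currified; assumption.
Qed.
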